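(* For every $x>0$ the limit $\lambda(x)=\lim_{k\to\infty}\frac{a(s^kx)}{(s^kx)^{\log_s p}}$ exists; moreover $\lambda(sx)=\lambda(x)$ and $\lambda(x)\in[m,M]$ for all $x>0$, where $m=\inf_{n\ge1}b_n$, $M=\sup_{n\ge1}b_n$. Furthermore the set $\{\lambda(x):x\in[s^{-1},1)\}$ is dense in $[m,M]$.
   Context: Fix integers $p\ge 3$ and $2\le s<p$, and a set $A\subset\{0,1,\dots,p-1\}$ with $\#A=s$. Let $h:\{0,1,\dots,s-1\}\to A$ be the unique strictly increasing bijection. For a positive integer $n$ with base-$s$ expansion $n=\sum_{i=0}^k\varepsilon_i s^i$ ($\varepsilon_i\in\{0,\dots,s-1\}$, $\varepsilon_k\ne 0$), put $a_n=\sum_{i=0}^k h(\varepsilon_i)p^i$, and put $a_0=h(0)$. Let $b_n=a_n/n^{\log_s p}$ for $n\ge1$. For real $x\ge0$ let $a(x)=a_{\lfloor x\rfloor}$. *)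

(* Defs.v *)
From Stdlib Require Import Reals Lra Lia Arith List Sorted.
Open Scope R_scope.

(* The set A ⊂ {0,..,p-1} with #A = s is represented by its increasing
   enumeration, a list A strictly sorted by <, of length s, all entries < p.
   The unique increasing bijection h : {0..s-1} -> A is then i |-> nth i A 0. *)
Definition hmap (A : list nat) (i : nat) : nat := nth i A 0%nat.

(* For n >= 1 with base-s digits eps_i : sum_i h(eps_i) p^i,
   computed by the recursion on the base-s expansion (fuel = n suffices). *)
Fixpoint adig (p s : nat) (A : list nat) (fuel n : nat) : nat :=
  match fuel with
  | O => O
  | S f => if Nat.eqb n 0 then O
           else (hmap A (n mod s) + p * adig p s A f (n / s))%nat
  end.

Definition aseq (p s : nat) (A : list nat) (n : nat) : nat :=
  if Nat.eqb n 0 then hmap A 0 else adig p s A n n.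

Definition logsp (p s : nat) : R := ln (INR p) / ln (INR s).

Definition bseq (p s : nat) (A : list nat) (n : nat) : R :=
  INR (aseq p s A n) / Rpower (INR n) (logsp p s).

Definition areal (p s : nat) (A : list nat) (x : R) : nat :=
  aseq p s A (Z.to_nat (Int_part x)).

Definition bset (p s : nat) (A : list nat) (y : R) : Prop :=
  exists n : nat, (1 <= n)%nat /\ y = bseq p s A n.

Definition is_glb (E : R -> Prop) (m : R) : Prop :=
  (forall y, E y -> m <= y) /\ (forall l, (forall y, E y -> l <= y) -> l <= m).

(* Main.v *)
Require Import Defs.
From Stdlib Require Import Reals Lra Lia ZArith Arith List Sorted ClassicalEpsilon Classical.
Open Scope R_scope.

Module NatPart.
Local Open Scope nat_scope.

Lemma npow_pos a b : (0 < a)%nat -> (0 < a ^ b)%nat.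
Proof. intros. pose proof (Nat.pow_nonzero a b). lia. Qed.

Definition Af p s A n := adig p s A n n.

Lemma adig_fuel p s A : (2 <= s)%nat -> forall f1 f2 n, (n <= f1)%nat -> (n <= f2)%nat ->
  adig p s A f1 n = adig p s A f2 n.
Proof.
  intros Hs f1. induction f1 as [|f1 IH]; intros f2 n H1 H2.
  - assert (n = 0%nat) by lia. subst. destruct f2; reflexivity.
  - destruct f2 as [|f2].
    + assert (n = 0%nat) by lia. subst. reflexivity.
    + simpl. destruct (Nat.eqb n 0) eqn:E; [reflexivity|].
      apply Nat.eqb_neq in E.
      assert (n / s < n)%nat by (apply Nat.div_lt; lia).
      rewrite (IH f2 (n / s)); [reflexivity| lia | lia].
Qed.

Lemma Af0 p s A : Af p s A 0 = 0%nat.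
Proof. reflexivity. Qed.

Lemma Arec p s A : (2 <= s)%nat -> forall n, (1 <= n)%nat ->
  Af p s A n = (hmap A (n mod s) + p * Af p s A (n / s))%nat.
Proof.
  intros Hs n Hn. unfold Af. destruct n as [|n']; [lia|].
  simpl adig at 1. replace (Nat.eqb (S n') 0) with false by reflexivity.
  f_equal. f_equal. apply adig_fuel; auto.
  assert (S n' / s < S n')%nat by (apply Nat.div_lt; lia). lia.
Qed.

Lemma Adecomp p s A : (2 <= s)%nat -> forall q d, (d < s)%nat -> (1 <= s*q+d)%nat ->
  Af p s A (s*q+d) = (hmap A d + p * Af p s A q)%nat.
Proof.
  intros Hs q d Hd H1. rewrite Arec; auto.
  rewrite <- (Nat.mod_unique (s*q+d) s q d); auto.
  rewrite <- (Nat.div_unique (s*q+d) s q d); auto.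
Qed.

Lemma aseq_A p s A n : (1 <= n)%nat -> aseq p s A n = Af p s A n.
Proof. intros. unfold aseq. destruct n; [lia|reflexivity]. Qed.

Lemma sorted_nth (l : list nat) : Sorted lt l -> forall i, (S i < length l)%nat ->
  (nth i l 0 < nth (S i) l 0)%nat.
Proof.
  induction l as [|a l IH]; intros HS i Hi; simpl in Hi; [lia|].
  inversion HS; subst. destruct i.
  - destruct l as [|b l]; simpl in Hi; [lia|]. simpl. inversion H2; auto.
  - simpl. apply IH; auto. lia.
Qed.

Record Hyp (p s : nat) (A : list nat) : Prop := {
  Hp : (3 <= p)%nat; Hs2 : (2 <= s)%nat; Hsp : (s < p)%nat;
  HAsort : Sorted lt A; HAlen : length A = s;
  HAsub : forall a, In a A -> (a < p)%nat }.

Lemma h_lt p s A : Hyp p s A -> forall i, (S i < s)%nat -> (hmap A i < hmap A (S i))%nat.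
Proof. intros H i Hi. destruct H. apply sorted_nth; auto; lia. Qed.

Lemma h_bound p s A : Hyp p s A -> forall i, (i < s)%nat -> (hmap A i < p)%nat.
Proof. intros H i Hi. destruct H. apply HAsub0. unfold hmap. apply nth_In. lia. Qed.

Lemma h_ge p s A : Hyp p s A -> forall i, (i < s)%nat -> (i <= hmap A i)%nat.
Proof.
  intros H i. induction i; intros Hi; [lia|].
  pose proof (h_lt p s A H i Hi). specialize (IHi ltac:(lia)). lia.
Qed.

Lemma A_strict p s A : Hyp p s A -> forall n, (Af p s A n < Af p s A (S n))%nat.
Proof.
  intros H. pose proof (Hs2 _ _ _ H) as Hs.
  intro n. induction n as [n IH] using (well_founded_induction lt_wf).
  destruct (Nat.eq_dec n 0) as [->|Hn0].
  - rewrite Af0. replace 1%nat with (s*0+1)%nat by lia. rewrite Adecomp; try lia.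
    pose proof (h_ge p s A H 1 ltac:(lia)). lia.
  - set (q := (n / s)%nat). set (d := (n mod s)%nat).
    assert (Hd : (d < s)%nat) by (apply Nat.mod_upper_bound; lia).
    assert (Hn : n = (s*q+d)%nat) by (apply Nat.div_mod; lia).
    assert (Hq : (q < n)%nat) by (apply Nat.div_lt; lia).
    destruct (Nat.eq_dec (S d) s) as [E|E].
    + assert (S n = s*(S q)+0)%nat by lia.
      rewrite H0, Hn, !Adecomp; try lia.
      pose proof (IH q Hq). pose proof (h_bound p s A H d Hd). nia.
    + assert (S n = s*q+S d)%nat by lia.
      rewrite H0, Hn, !Adecomp; try lia.
      pose proof (h_lt p s A H d ltac:(lia)). lia.
Qed.

Lemma A_mono p s A : Hyp p s A -> forall n m, (n <= m)%nat -> (Af p s A n <= Af p s A m)%nat.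
Proof.
  intros H n m Hnm. induction Hnm; [lia|]. pose proof (A_strict p s A H m). lia.
Qed.

Lemma A_ge p s A : Hyp p s A -> forall n, (n <= Af p s A n)%nat.
Proof.
  intros H n. induction n; [lia|]. pose proof (A_strict p s A H n). lia.
Qed.

Lemma A_bound p s A : Hyp p s A -> forall k n, (n < s^k)%nat -> (Af p s A n < p^k)%nat.
Proof.
  intros H. pose proof (Hs2 _ _ _ H) as Hs. induction k; intros n Hn.
  - simpl in *. assert (n = 0%nat) by lia. subst. rewrite Af0. lia.
  - destruct (Nat.eq_dec n 0) as [->|Hn0].
    + rewrite Af0. pose proof (Hsp _ _ _ H). assert (0 < p ^ S k)%nat by (apply npow_pos; lia). lia.
    + rewrite Arec by lia.
      assert (n / s < s ^ k)%nat by (apply Nat.Div0.div_lt_upper_bound; simpl in Hn; lia).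
      specialize (IHk _ H0).
      pose proof (h_bound p s A H (n mod s) ltac:(apply Nat.mod_upper_bound; lia)).
      simpl. set (X := Af p s A (n / s)) in *. set (Y := p ^ k) in *.
      assert (p * (X + 1) <= p * Y) by (apply Nat.mul_le_mono_l; lia). lia.
Qed.

Lemma A_scale p s A : Hyp p s A -> forall j n, (1 <= n)%nat ->
  (Af p s A (s^j * n) + 1 <= p^j * (Af p s A n + 1))%nat.
Proof.
  intros H. pose proof (Hs2 _ _ _ H) as Hs. induction j; intros n Hn.
  - rewrite !Nat.pow_0_r, !Nat.mul_1_l. lia.
  - assert (0 < s^j)%nat by (apply npow_pos; lia).
    assert (1 <= s^j*n)%nat by (pose proof (Nat.mul_le_mono 1 (s^j) 1 n); lia).
    replace (s^S j * n)%nat with (s*(s^j*n)+0)%nat by (simpl; lia).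
    rewrite Adecomp by lia. pose proof (IHj n Hn).
    pose proof (h_bound p s A H 0 ltac:(lia)).
    set (X := Af p s A (s^j*n)) in *. set (Y := p^j * (Af p s A n + 1)) in *.
    replace (p ^ S j * (Af p s A n + 1))%nat with (p * Y) by (unfold Y; simpl; lia).
    assert (p * (X+1) <= p * Y) by (apply Nat.mul_le_mono_l; lia). lia.
Qed.

Lemma A_scale_ge p s A : Hyp p s A -> forall n, (1 <= n)%nat ->
  (p * Af p s A n <= Af p s A (s * n))%nat.
Proof.
  intros H n Hn. pose proof (Hs2 _ _ _ H). replace (s*n)%nat with (s*n+0)%nat by lia.
  rewrite Adecomp by nia. lia.
Qed.

Definition pad s j m := (s^j * (m+1) - 1)%nat.

Lemma A_pad p s A : Hyp p s A -> forall j m, (1 <= m)%nat ->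
  (Af p s A (pad s j m) + 1 <= p^j * (Af p s A m + 1))%nat.
Proof.
  intros H. pose proof (Hs2 _ _ _ H) as Hs. induction j; intros m Hm.
  - unfold pad. rewrite !Nat.pow_0_r, !Nat.mul_1_l. replace (m+1-1)%nat with m by lia. lia.
  - assert (0 < s^j)%nat by (apply npow_pos; lia).
    assert (L : (2 <= s^j * (m+1))%nat) by (pose proof (Nat.mul_le_mono 1 (s^j) 2 (m+1)); lia).
    assert (E : pad s (S j) m = (s * pad s j m + (s-1))%nat).
    { unfold pad. rewrite Nat.pow_succ_r'. set (Z := (s^j * (m+1))%nat) in *.
      rewrite <- Nat.mul_assoc. fold Z. rewrite Nat.mul_sub_distr_l. nia. }
    rewrite E, Adecomp by lia.
    pose proof (IHj m Hm). pose proof (h_bound p s A H (s-1) ltac:(lia)).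
    set (X := Af p s A (pad s j m)) in *. set (Y := p^j * (Af p s A m + 1)) in *.
    replace (p ^ S j * (Af p s A m + 1))%nat with (p * Y) by (unfold Y; simpl; lia).
    assert (p * (X+1) <= p * Y) by (apply Nat.mul_le_mono_l; lia). lia.
Qed.

Lemma log_exists s : (2 <= s)%nat -> forall n, (1 <= n)%nat -> exists k, (s^k <= n < s^(S k))%nat.
Proof.
  intros Hs n. induction n as [n IH] using (well_founded_induction lt_wf). intros Hn.
  destruct (Nat.lt_ge_cases n s).
  - exists 0%nat. simpl. lia.
  - assert (n / s < n)%nat by (apply Nat.div_lt; lia).
    assert (1 <= n / s)%nat. { apply Nat.div_le_lower_bound; lia. }
    destruct (IH _ H0 H1) as [k Hk]. exists (S k).
    pose proof (Nat.div_mod n s ltac:(lia)). pose proof (Nat.mod_upper_bound n s ltac:(lia)).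
    simpl in *. nia.
Qed.

End NatPart.
Import NatPart.


Lemma nat_large z : exists n : nat, z < INR n.
Proof.
  destruct (archimed z) as [H1 _].
  destruct (Z.lt_ge_cases (up z) 0) as [Hl|Hl].
  - exists 0%nat. simpl. apply IZR_lt in Hl. lra.
  - exists (Z.to_nat (up z)). rewrite INR_IZR_INZ, Z2Nat.id by lia. lra.
Qed.

Lemma pow_ge_lin s k : (2 <= s)%nat -> INR k + 1 <= INR s ^ k.
Proof.
  intros Hs. apply le_INR in Hs. simpl in Hs. induction k.
  - simpl. lra.
  - rewrite S_INR. simpl. assert (0 <= INR k) by apply pos_INR. nra.
Qed.

Definition fl (y : R) : nat := Z.to_nat (Int_part y).

Lemma fl_spec y : 0 <= y -> INR (fl y) <= y < INR (fl y) + 1.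
Proof.
  intros Hy. destruct (base_Int_part y) as [H1 H2].
  assert (0 <= Int_part y)%Z.
  { assert (-1 < IZR (Int_part y)) by lra. apply lt_IZR in H. lia. }
  unfold fl. rewrite INR_IZR_INZ, Z2Nat.id by lia. lra.
Qed.

Lemma fl_unique y n : INR n <= y < INR n + 1 -> fl y = n.
Proof.
  intros [H1 H2]. pose proof (pos_INR n). destruct (fl_spec y ltac:(lra)) as [H3 H4].
  assert (fl y < n + 1)%nat. { apply INR_lt. rewrite plus_INR. simpl. lra. }
  assert (n < fl y + 1)%nat. { apply INR_lt. rewrite plus_INR. simpl. lra. }
  lia.
Qed.

Lemma fl_INR n : fl (INR n) = n.
Proof. apply fl_unique. lra. Qed.

Section Pw.
End Pw.

Definition al p s := logsp p s.
Definition P p s y := Rpower y (logsp p s).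

Lemma ln_s_pos s : (2 <= s)%nat -> 0 < ln (INR s).
Proof. intros. rewrite <- ln_1. apply ln_increasing. lra. apply lt_1_INR. lia. Qed.

Lemma Ps p s : (2 <= s)%nat -> (1 <= p)%nat -> P p s (INR s) = INR p.
Proof.
  intros Hs Hp. unfold P, Rpower, logsp. pose proof (ln_s_pos s Hs).
  replace (ln (INR p) / ln (INR s) * ln (INR s)) with (ln (INR p)) by (field; lra).
  apply exp_ln. apply lt_0_INR. lia.
Qed.

Lemma al_ge1 p s : (2 <= s)%nat -> (s < p)%nat -> 1 <= logsp p s.
Proof.
  intros Hs Hp. unfold logsp. pose proof (ln_s_pos s Hs).
  apply (Rmult_le_reg_r (ln (INR s))); auto. unfold Rdiv. rewrite Rmult_assoc, Rinv_l by lra.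
  rewrite Rmult_1_l, Rmult_1_r. apply Rlt_le. apply ln_increasing.
  apply lt_0_INR; lia. apply lt_INR; lia.
Qed.

Lemma al_lep p s : (2 <= s)%nat -> (s < p)%nat -> logsp p s <= INR p.
Proof.
  intros Hs Hp. unfold logsp. pose proof (ln_s_pos s Hs).
  apply (Rmult_le_reg_r (ln (INR s))); auto. unfold Rdiv. rewrite Rmult_assoc, Rinv_l by lra.
  rewrite Rmult_1_r. rewrite <- ln_pow by (apply lt_0_INR; lia).
  rewrite <- pow_INR. apply Rlt_le. apply ln_increasing. apply lt_0_INR; lia.
  apply lt_INR. apply Nat.lt_le_trans with (2^p)%nat. apply Nat.pow_gt_lin_r; lia.
  apply Nat.pow_le_mono_l. lia.
Qed.

Lemma P_pos p s y : 0 < y -> 0 < P p s y.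
Proof. intros. unfold P, Rpower. apply exp_pos. Qed.

Lemma P_mul p s a b : 0 < a -> 0 < b -> P p s (a * b) = P p s a * P p s b.
Proof. intros. unfold P. rewrite Rpower_mult_distr; auto. Qed.

Lemma P_1 p s : P p s 1 = 1.
Proof. unfold P, Rpower. rewrite ln_1, Rmult_0_r. apply exp_0. Qed.

Lemma P_spow p s k y : (2 <= s)%nat -> (1 <= p)%nat -> 0 < y ->
  P p s (INR s ^ k * y) = INR p ^ k * P p s y.
Proof.
  intros Hs Hp Hy. assert (0 < INR s) by (apply lt_0_INR; lia). induction k.
  - simpl. rewrite !Rmult_1_l. reflexivity.
  - simpl. rewrite Rmult_assoc, P_mul, IHk, Ps; auto. ring.
    apply Rmult_lt_0_compat; auto. apply pow_lt; auto.
Qed.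

Lemma P_mono p s a b : (2 <= s)%nat -> (s < p)%nat -> 0 < a <= b -> P p s a <= P p s b.
Proof.
  intros. unfold P. apply Rle_Rpower_l; auto. pose proof (al_ge1 p s H H0). lra.
Qed.

Lemma P_ge_id p s y : (2 <= s)%nat -> (s < p)%nat -> 1 <= y -> y <= P p s y.
Proof.
  intros. unfold P. rewrite <- (Rpower_1 y) at 1 by lra. apply Rle_Rpower; auto.
  apply al_ge1; auto.
Qed.

Lemma bernoulli r n : 0 <= r <= 1 -> 1 - INR n * (1 - r) <= r ^ n.
Proof.
  intros Hr. induction n.
  - simpl. lra.
  - rewrite S_INR. simpl. assert (0 <= INR n) by apply pos_INR.
    assert (0 <= r * (r ^ n - (1 - INR n * (1 - r)))) by (apply Rmult_le_pos; lra).
    assert (0 <= INR n * ((1 - r) * (1 - r))) by (apply Rmult_le_pos; nra). nra.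
Qed.

Lemma exp_le x y : x <= y -> exp x <= exp y.
Proof. intros [H|H]. left. apply exp_increasing; auto. subst; lra. Qed.

Lemma P_bern p s r : (2 <= s)%nat -> (s < p)%nat -> 0 < r <= 1 -> 1 - INR p * (1 - r) <= P p s r.
Proof.
  intros Hs Hp Hr. eapply Rle_trans. apply bernoulli; lra.
  rewrite <- Rpower_pow by lra. unfold P, Rpower. apply exp_le.
  assert (ln r <= 0). { destruct (Req_dec r 1). subst. rewrite ln_1. lra. left. rewrite <- ln_1. apply ln_increasing; lra. }
  pose proof (al_lep p s Hs Hp). nra.
Qed.

Lemma P_split p s a r : (2 <= s)%nat -> (s < p)%nat -> 0 < a -> 0 < r <= 1 ->
  P p s a * (1 - INR p * (1 - r)) <= P p s (a * r).
Proof.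
  intros. rewrite P_mul by lra. apply Rmult_le_compat_l. left; apply P_pos; auto.
  apply P_bern; auto.
Qed.


Lemma div_le x y z : 0 < y -> x <= z * y -> x / y <= z.
Proof.
  intros Hy H. unfold Rdiv. apply (Rmult_le_reg_r y); auto.
  rewrite Rmult_assoc, Rinv_l by lra. lra.
Qed.

Lemma le_div x y z : 0 < y -> z * y <= x -> z <= x / y.
Proof.
  intros Hy H. unfold Rdiv. apply (Rmult_le_reg_r y); auto.
  rewrite Rmult_assoc, Rinv_l by lra. lra.
Qed.

Lemma INRpos n : (1 <= n)%nat -> 0 < INR n.
Proof. intros. apply lt_0_INR. lia. Qed.

Lemma b_eq p s A n : (1 <= n)%nat -> bseq p s A n = INR (Af p s A n) / P p s (INR n).
Proof. intros. unfold bseq, P. rewrite aseq_A; auto. Qed.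

Lemma b_le_p p s A n : Hyp p s A -> (1 <= n)%nat -> bseq p s A n <= INR p.
Proof.
  intros H Hn. destruct H as [Hp Hs Hsp HS HL HI] eqn:EH. rewrite b_eq; auto.
  destruct (log_exists s Hs n Hn) as [k [Hk1 Hk2]].
  pose proof (A_bound p s A H (S k) n Hk2).
  apply lt_INR in H0. rewrite pow_INR in H0. simpl in H0.
  apply div_le. apply P_pos, INRpos; auto.
  assert (INR p ^ k <= P p s (INR n)).
  { rewrite <- (Rmult_1_r (INR p ^ k)), <- (P_1 p s), <- P_spow by (lia || lra).
    apply P_mono; auto. rewrite Rmult_1_r, <- pow_INR. split. apply INRpos. pose proof (npow_pos s k ltac:(lia)). lia.
    apply le_INR; auto. }
  assert (0 < INR p) by (apply INRpos; lia). nra.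
Qed.

Lemma b_pos p s A n : Hyp p s A -> (1 <= n)%nat -> 0 < bseq p s A n.
Proof.
  intros H Hn. rewrite b_eq; auto. unfold Rdiv. apply Rmult_lt_0_compat.
  apply INRpos. pose proof (A_ge p s A H n). lia.
  apply Rinv_0_lt_compat, P_pos, INRpos; auto.
Qed.

Lemma b_s_ge p s A n : Hyp p s A -> (1 <= n)%nat -> bseq p s A n <= bseq p s A (s * n).
Proof.
  intros H Hn. destruct H as [Hp Hs Hsp HS HL HI] eqn:EH.
  assert (1 <= s * n)%nat by nia.
  rewrite !b_eq; auto. rewrite mult_INR. pose proof (A_scale_ge p s A H n Hn).
  apply le_INR in H1. rewrite mult_INR in H1.
  replace (INR s * INR n) with (INR s ^ 1 * INR n) by ring.
  rewrite P_spow by (lia || apply INRpos; lia).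
  pose proof (P_pos p s (INR n) (INRpos n Hn)).
  assert (0 < INR p) by (apply INRpos; lia).
  apply le_div. nra. unfold Rdiv. rewrite pow_1.
  replace (INR (Af p s A n) * / P p s (INR n) * (INR p * P p s (INR n)))
    with (INR p * INR (Af p s A n)) by (field; lra). lra.
Qed.

Lemma b_sj_ge p s A j n : Hyp p s A -> (1 <= n)%nat -> bseq p s A n <= bseq p s A (s^j * n).
Proof.
  intros H Hn. pose proof (Hs2 _ _ _ H). induction j.
  - rewrite Nat.pow_0_r, Nat.mul_1_l. lra.
  - eapply Rle_trans. apply IHj. rewrite Nat.pow_succ_r', <- Nat.mul_assoc. apply b_s_ge; auto.
    assert (0 < s^j)%nat by (apply npow_pos; lia). nia.
Qed.

Lemma b_sj_le p s A j n : Hyp p s A -> (1 <= n)%nat ->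
  bseq p s A (s^j * n) <= bseq p s A n + / P p s (INR n).
Proof.
  intros H Hn. destruct H as [Hp Hs Hsp HS HL HI] eqn:EH.
  assert (0 < s^j)%nat by (apply npow_pos; lia).
  assert (1 <= s^j * n)%nat by (pose proof (Nat.mul_le_mono 1 (s^j) 1 n); lia).
  rewrite !b_eq; auto. rewrite mult_INR, pow_INR, P_spow by (lia || apply INRpos; lia).
  pose proof (A_scale p s A H j n Hn). apply le_INR in H2.
  rewrite plus_INR, mult_INR, pow_INR, plus_INR in H2. simpl in H2.
  pose proof (P_pos p s (INR n) (INRpos n Hn)).
  assert (0 < INR p ^ j) by (apply pow_lt, INRpos; lia).
  apply div_le. nra.
  replace ((INR (Af p s A n) / P p s (INR n) + / P p s (INR n)) * (INR p ^ j * P p s (INR n)))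
    with (INR p ^ j * (INR (Af p s A n) + 1)) by (field; lra). lra.
Qed.

Lemma b_shift p s A n : Hyp p s A -> (1 <= n)%nat ->
  bseq p s A n - INR p * INR p / (INR n + 1) <= INR (Af p s A n) / P p s (INR n + 1).
Proof.
  intros H Hn. destruct H as [Hp Hs Hsp HS HL HI] eqn:EH.
  pose proof (b_le_p p s A n H Hn). pose proof (b_pos p s A n H Hn).
  rewrite !b_eq in * by lia.
  assert (Hn0 : 0 < INR n) by (apply INRpos; auto).
  set (a := INR (Af p s A n)) in *.
  pose proof (P_pos p s (INR n) Hn0) as HP.
  pose proof (P_pos p s (INR n + 1) ltac:(lra)) as HP1.
  pose proof (P_split p s (INR n + 1) (INR n / (INR n + 1)) Hs Hsp ltac:(lra)).
  replace ((INR n + 1) * (INR n / (INR n + 1))) with (INR n) in H2 by (field; lra).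
  replace (1 - INR n / (INR n + 1)) with (/ (INR n + 1)) in H2 by (field; lra).
  assert (0 < INR n / (INR n + 1) <= 1).
  { split. apply Rdiv_lt_0_compat; lra. apply div_le; lra. }
  specialize (H2 H3).
  set (Pn := P p s (INR n)) in *. set (Pn1 := P p s (INR n + 1)) in *.
  set (t := / (INR n + 1)) in *.
  assert (0 < t) by (apply Rinv_0_lt_compat; lra).
  assert (a / Pn * (1 - INR p * t) <= a / Pn1).
  { apply le_div; auto. replace (a / Pn * (1 - INR p * t) * Pn1) with (a / Pn * (Pn1 * (1 - INR p * t))) by ring.
    destruct (Rle_lt_dec 0 (1 - INR p * t)).
    - eapply Rle_trans. apply Rmult_le_compat_l. left; auto. exact H2.
      unfold Rdiv. rewrite Rmult_assoc, Rinv_l by lra. lra.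
    - assert (Pn1 * (1 - INR p * t) < 0) by nra. assert (0 <= a) by (unfold a; apply pos_INR). nra. }
  replace (INR p * INR p / (INR n + 1)) with (INR p * INR p * t) by (unfold t, Rdiv; ring).
  set (bb := a / Pn) in *. assert (0 < INR p) by (apply INRpos; lia).
  assert (bb * (INR p * t) <= INR p * (INR p * t)) by (apply Rmult_le_compat_r; nra). nra.
Qed.

Lemma b_step p s A n : Hyp p s A -> (1 <= n)%nat ->
  bseq p s A n - INR p * INR p / (INR n + 1) <= bseq p s A (S n).
Proof.
  intros H Hn. eapply Rle_trans. apply b_shift; auto.
  rewrite b_eq by lia. rewrite S_INR. pose proof (A_strict p s A H n). apply lt_INR in H0.
  unfold Rdiv. apply Rmult_le_compat_r. left; apply Rinv_0_lt_compat, P_pos.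
  pose proof (pos_INR n); lra. lra.
Qed.

Lemma b_pad p s A j m : Hyp p s A -> (1 <= m)%nat ->
  INR p / (INR s ^ j * (INR m + 1)) <= / 2 ->
  bseq p s A (pad s j m) <= bseq p s A m + 2 * INR p * (INR p / (INR s ^ j * (INR m + 1))).
Proof.
  intros H Hm Hd. destruct H as [Hp Hs Hsp HS HL HI] eqn:EH.
  assert (Hsj : (0 < s^j)%nat) by (apply npow_pos; lia).
  assert (L : (2 <= s^j * (m+1))%nat) by (pose proof (Nat.mul_le_mono 1 (s^j) 2 (m+1)); lia).
  assert (Hpad1 : (1 <= pad s j m)%nat) by (unfold pad; lia).
  set (T := INR s ^ j * (INR m + 1)) in *.
  assert (ET : INR (pad s j m) = T - 1).
  { unfold pad, T. rewrite minus_INR by lia. rewrite mult_INR, pow_INR, plus_INR. simpl. ring. }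
  assert (HT : 2 <= T). { unfold T. rewrite <- pow_INR. replace (INR m + 1) with (INR (m+1)) by (rewrite plus_INR; simpl; ring).
    rewrite <- mult_INR. apply (le_INR 2). lia. }
  set (d := INR p / T) in *.
  assert (Hp0 : 0 < INR p) by (apply INRpos; lia).
  assert (Hd0 : 0 < d) by (unfold d; apply Rdiv_lt_0_compat; lra).
  pose proof (b_le_p p s A m H Hm) as HB. pose proof (b_pos p s A m H Hm) as HB0.
  rewrite !b_eq in * by lia. rewrite ET.
  assert (Hm0 : 0 < INR m) by (apply INRpos; auto).
  set (Am := INR (Af p s A m)) in *. set (Pm := P p s (INR m)) in *.
  assert (HPm : 0 < Pm) by (apply P_pos; auto).
  set (B := Am / Pm) in *.
  pose proof (P_split p s T (1 - / T) Hs Hsp ltac:(lra)) as K1.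
  assert (0 < /T) by (apply Rinv_0_lt_compat; lra).
  assert (/ T <= /2) by (apply Rinv_le_contravar; lra).
  specialize (K1 ltac:(lra)).
  replace (T * (1 - / T)) with (T - 1) in K1 by (field; lra).
  replace (INR p * (1 - (1 - / T))) with d in K1 by (unfold d, Rdiv; ring).
  assert (EPT : P p s T = INR p ^ j * P p s (INR m + 1)) by (unfold T; apply P_spow; lia || lra).
  assert (K2 : Pm * ((INR m + 1) / INR m) <= P p s (INR m + 1)).
  { replace (INR m + 1) with (INR m * ((INR m + 1) / INR m)) at 2 by (field; lra).
    rewrite P_mul; [| lra | apply Rdiv_lt_0_compat; lra].
    apply Rmult_le_compat_l; [left; apply P_pos; auto|]. apply P_ge_id; auto.
    apply le_div; lra. }
  pose proof (A_pad p s A H j m Hm) as K3. apply le_INR in K3.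
  rewrite plus_INR, mult_INR, pow_INR, plus_INR in K3. simpl in K3. fold Am in K3.
  pose proof (A_ge p s A H m) as K4. apply le_INR in K4. fold Am in K4.
  assert (Hpj : 0 < INR p ^ j) by (apply pow_lt; lra).
  set (Q := (INR m + 1) / INR m) in *.
  assert (HQ : 1 < Q) by (unfold Q; apply Rlt_gt; apply Rmult_lt_reg_r with (INR m); auto;
      unfold Rdiv; rewrite Rmult_assoc, Rinv_l by lra; lra).
  set (D := INR p ^ j * (Pm * Q) * (1 - d)).
  assert (HD : 0 < D) by (unfold D; apply Rmult_lt_0_compat; [apply Rmult_lt_0_compat; nra | lra]).
  assert (HPD : D <= P p s (T - 1)).
  { eapply Rle_trans; [|exact K1]. rewrite EPT. unfold D.
    apply Rmult_le_compat_r; [lra|]. apply Rmult_le_compat_l; lra. }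
  apply div_le. lra.
  assert (HAm1 : Am + 1 <= Am * Q).
  { unfold Q. apply (Rmult_le_reg_r (INR m)); auto. unfold Rdiv.
    replace (Am * ((INR m + 1) * / INR m) * INR m) with (Am * (INR m + 1)) by (field; lra). nra. }
  assert (HBd : B <= (B + 2 * INR p * d) * (1 - d)).
  { assert (0 <= 1 - 2 * d) by lra.
    assert (0 <= d * (INR p - B)) by (apply Rmult_le_pos; lra).
    assert (0 <= d * (INR p * (1 - 2 * d))) by (apply Rmult_le_pos; [lra| apply Rmult_le_pos; lra]). nra. }
  assert (EB : Am = B * Pm) by (unfold B; field; lra).
  assert (Am * Q <= (B + 2 * INR p * d) * (Pm * Q) * (1 - d)).
  { rewrite EB. replace ((B + 2 * INR p * d) * (Pm * Q) * (1 - d)) with ((B + 2 * INR p * d) * (1 - d) * (Pm * Q)) by ring.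
    replace (B * Pm * Q) with (B * (Pm * Q)) by ring. apply Rmult_le_compat_r; nra. }
  apply Rle_trans with ((B + 2 * INR p * d) * D).
  - unfold D. replace ((B + 2 * INR p * d) * (INR p ^ j * (Pm * Q) * (1 - d))) with
      (INR p ^ j * ((B + 2 * INR p * d) * (Pm * Q) * (1 - d))) by ring.
    apply Rle_trans with (INR p ^ j * (Am + 1)); [lra|]. apply Rmult_le_compat_l; lra.
  - apply Rmult_le_compat_l; [|lra]. nra.
Qed.


Definition g p s A x k := INR (areal p s A (INR s ^ k * x)) / Rpower (INR s ^ k * x) (logsp p s).
Definition NN s x k := fl (INR s ^ k * x).

Lemma spow_pos s k : (2 <= s)%nat -> 0 < INR s ^ k.
Proof. intros. apply pow_lt. apply INRpos. lia. Qed.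

Lemma NN_step s x k : (2 <= s)%nat -> 0 < x ->
  (s * NN s x k <= NN s x (S k) < s * NN s x k + s)%nat.
Proof.
  intros Hs Hx. unfold NN. pose proof (spow_pos s k Hs).
  set (y := INR s ^ k * x).
  assert (E : INR s ^ S k * x = INR s * y) by (unfold y; simpl; ring). rewrite E.
  assert (Hy : 0 <= y) by (unfold y; nra).
  destruct (fl_spec y Hy) as [H1 H2].
  assert (0 <= INR s * y) by (assert (0 < INR s) by (apply INRpos; lia); apply Rmult_le_pos; lra).
  destruct (fl_spec (INR s * y) H0) as [H3 H4].
  assert (Hs0 : 0 < INR s) by (apply INRpos; lia).
  set (n := fl y) in *. set (n' := fl (INR s * y)) in *.
  assert (INR (s * n) < INR n' + 1) by (rewrite mult_INR; nra).
  assert (INR n' < INR (s * n + s)) by (rewrite plus_INR, mult_INR; nra).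
  assert (s * n < n' + 1)%nat. { apply INR_lt. rewrite plus_INR. simpl. lra. }
  assert (n' < s * n + s)%nat by (apply INR_lt; auto).
  lia.
Qed.

Lemma NN_grow s x k : (2 <= s)%nat -> 0 < x -> (1 <= NN s x k)%nat ->
  (1 <= NN s x (S k))%nat /\ (NN s x k <= NN s x (S k))%nat.
Proof. intros. pose proof (NN_step s x k H H0). nia. Qed.

Lemma NN_big s x k : (2 <= s)%nat -> 0 < x -> (INR k + 1) * x < INR (NN s x k) + 1.
Proof.
  intros Hs Hx. unfold NN. pose proof (pow_ge_lin s k Hs). pose proof (spow_pos s k Hs).
  assert (Hy : 0 <= INR s ^ k * x) by nra.
  destruct (fl_spec (INR s ^ k * x) Hy) as [_ H2]. nra.
Qed.

Lemma NN_ev s x : (2 <= s)%nat -> 0 < x -> exists k0, forall k, (k0 <= k)%nat -> (1 <= NN s x k)%nat.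
Proof.
  intros Hs Hx. destruct (nat_large (/ x)) as [n Hn]. exists n.
  intros k Hk. induction Hk.
  - pose proof (NN_big s x n Hs Hx).
    assert (1 < (INR n + 1) * x).
    { assert (INR n * x > 1). { apply (Rmult_lt_compat_r x) in Hn; auto. rewrite Rinv_l in Hn; lra. } nra. }
    assert (0 < NN s x n)%nat. { apply INR_lt. simpl. lra. } lia.
  - apply NN_grow; auto.
Qed.

Lemma g_eq p s A x k : (2 <= s)%nat -> 0 < x -> (1 <= NN s x k)%nat ->
  g p s A x k = INR (Af p s A (NN s x k)) / P p s (INR s ^ k * x).
Proof. intros. unfold g, areal, P. fold (fl (INR s ^ k * x)). fold (NN s x k). rewrite aseq_A; auto. Qed.

Lemma g_inc p s A x k : Hyp p s A -> 0 < x -> (1 <= NN s x k)%nat -> g p s A x k <= g p s A x (S k).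
Proof.
  intros H Hx Hk. destruct H as [Hp Hs Hsp HS HL HI] eqn:EH.
  destruct (NN_grow s x k Hs Hx Hk) as [Hk' _].
  rewrite !g_eq; auto.
  replace (INR s ^ S k * x) with (INR s ^ 1 * (INR s ^ k * x)) by (simpl; ring).
  pose proof (spow_pos s k Hs).
  rewrite (P_spow p s 1) by (lia || nra).
  pose proof (A_scale_ge p s A H (NN s x k) Hk).
  pose proof (A_mono p s A H (s * NN s x k) (NN s x (S k)) ltac:(pose proof (NN_step s x k Hs Hx); lia)).
  assert (INR p * INR (Af p s A (NN s x k)) <= INR (Af p s A (NN s x (S k)))).
  { rewrite <- mult_INR. apply le_INR. lia. }
  pose proof (P_pos p s (INR s ^ k * x) ltac:(nra)).
  assert (0 < INR p) by (apply INRpos; lia).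
  rewrite pow_1. apply le_div. nra.
  unfold Rdiv. replace (INR (Af p s A (NN s x k)) * / P p s (INR s ^ k * x) * (INR p * P p s (INR s ^ k * x)))
    with (INR p * INR (Af p s A (NN s x k))) by (field; lra). lra.
Qed.

Lemma g_le_b p s A x k : Hyp p s A -> 0 < x -> (1 <= NN s x k)%nat -> g p s A x k <= bseq p s A (NN s x k).
Proof.
  intros H Hx Hk. destruct H as [Hp Hs Hsp HS HL HI] eqn:EH.
  rewrite g_eq, b_eq; auto. pose proof (spow_pos s k Hs).
  assert (0 < INR (NN s x k)) by (apply INRpos; auto).
  assert (INR (NN s x k) <= INR s ^ k * x) by (apply fl_spec; nra).
  unfold Rdiv. apply Rmult_le_compat_l. apply pos_INR.
  apply Rinv_le_contravar. apply P_pos; auto. apply P_mono; auto.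
Qed.

Lemma g_ge_b p s A x k : Hyp p s A -> 0 < x -> (1 <= NN s x k)%nat ->
  bseq p s A (NN s x k) - INR p * INR p / (INR (NN s x k) + 1) <= g p s A x k.
Proof.
  intros H Hx Hk. destruct H as [Hp Hs Hsp HS HL HI] eqn:EH.
  eapply Rle_trans. apply b_shift; auto.
  rewrite g_eq; auto. pose proof (spow_pos s k Hs).
  assert (0 < INR (NN s x k)) by (apply INRpos; auto).
  assert (INR s ^ k * x < INR (NN s x k) + 1) by (apply fl_spec; nra).
  unfold Rdiv. apply Rmult_le_compat_l. apply pos_INR.
  apply Rinv_le_contravar. apply P_pos; nra. apply P_mono; auto. nra.
Qed.

Lemma lim_le u l c k0 : Un_cv u l -> (forall k, (k0 <= k)%nat -> u k <= c) -> l <= c.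
Proof.
  intros Hcv Hb. destruct (Rle_lt_dec l c); auto.
  destruct (Hcv (l - c) ltac:(lra)) as [N HN].
  specialize (HN (Nat.max N k0) ltac:(lia)). specialize (Hb (Nat.max N k0) ltac:(lia)).
  unfold Rdist in HN. apply Rabs_def2 in HN. lra.
Qed.

Lemma lim_ge u l c k0 : Un_cv u l -> (forall k, (k0 <= k)%nat -> c <= u k) -> c <= l.
Proof.
  intros Hcv Hb. destruct (Rle_lt_dec c l); auto.
  destruct (Hcv (c - l) ltac:(lra)) as [N HN].
  specialize (HN (Nat.max N k0) ltac:(lia)). specialize (Hb (Nat.max N k0) ltac:(lia)).
  unfold Rdist in HN. apply Rabs_def2 in HN. lra.
Qed.

Lemma cv_shift u l k0 : Un_cv (fun j => u (j + k0)%nat) l -> Un_cv u l.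
Proof.
  intros H eps He. destruct (H eps He) as [N HN]. exists (N + k0)%nat. intros n Hn.
  replace n with ((n - k0) + k0)%nat by lia. apply HN. lia.
Qed.

Lemma cv_shift1 u l : Un_cv u l -> Un_cv (fun j => u (S j)) l.
Proof.
  intros H eps He. destruct (H eps He) as [N HN]. exists N. intros n Hn. apply HN. lia.
Qed.

Lemma cv_ext u v l : Un_cv u l -> (forall k, v k = u k) -> Un_cv v l.
Proof.
  intros H E eps He. destruct (H eps He) as [N HN]. exists N. intros n Hn. rewrite E. apply HN; auto.
Qed.

Lemma g_conv p s A x : Hyp p s A -> 0 < x -> exists l, Un_cv (g p s A x) l.
Proof.
  intros H Hx. pose proof (Hs2 _ _ _ H) as Hs.
  destruct (NN_ev s x Hs Hx) as [k0 Hk0].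
  assert (Hg : Un_growing (fun j => g p s A x (j + k0)%nat)).
  { intro j. simpl. apply g_inc; auto. apply Hk0; lia. }
  assert (Hb : has_ub (fun j => g p s A x (j + k0)%nat)).
  { exists (INR p). intros y [j ->]. eapply Rle_trans. apply g_le_b; auto. apply Hk0; lia.
    apply b_le_p; auto. apply Hk0; lia. }
  destruct (growing_cv _ Hg Hb) as [l Hl]. exists l. eapply cv_shift; eauto.
Qed.


Lemma g_mono p s A x k0 : Hyp p s A -> 0 < x -> (forall k, (k0 <= k)%nat -> (1 <= NN s x k)%nat) ->
  forall k j, (k0 <= k)%nat -> (k <= j)%nat -> g p s A x k <= g p s A x j.
Proof.
  intros H Hx Hk0 k j Hk Hkj. induction Hkj. lra.
  eapply Rle_trans. apply IHHkj. apply g_inc; auto. apply Hk0. lia.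
Qed.

Lemma walk (f : nat -> R) c d0 : (forall i, f i - d0 <= f (S i)) -> c < f 0%nat ->
  forall d, f d <= c -> exists i, (i <= d)%nat /\ c - d0 <= f i <= c.
Proof.
  intros Hst H0 d. induction d; intros Hd.
  - lra.
  - destruct (Rle_lt_dec (c - d0) (f (S d))).
    + exists (S d). split; [lia|lra].
    + pose proof (Hst d). destruct IHd as [i [Hi1 Hi2]]. lra. exists i. split; [lia|lra].
Qed.

Lemma lam_upper p s A x l M : Hyp p s A -> 0 < x -> Un_cv (g p s A x) l ->
  (forall n, (1 <= n)%nat -> bseq p s A n <= M) -> l <= M.
Proof.
  intros H Hx Hl HM. pose proof (Hs2 _ _ _ H) as Hs. destruct (NN_ev s x Hs Hx) as [k0 Hk0].
  apply (lim_le _ _ _ k0 Hl). intros k Hk. eapply Rle_trans. apply g_le_b; auto. apply HM; auto.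
Qed.

Lemma lam_lower p s A x l m : Hyp p s A -> 0 < x -> Un_cv (g p s A x) l ->
  (forall n, (1 <= n)%nat -> m <= bseq p s A n) -> m <= l.
Proof.
  intros H Hx Hl Hm. pose proof (Hs2 _ _ _ H) as Hs. destruct (NN_ev s x Hs Hx) as [k0 Hk0].
  destruct (Rle_lt_dec m l) as [|Hlt]; auto. exfalso.
  assert (Hp0 : 0 < INR p * INR p) by (assert (0 < INR p) by (apply INRpos; pose proof (Hp _ _ _ H); lia); nra).
  destruct (nat_large (INR p * INR p / (m - l) / x)) as [j Hj].
  set (k := (j + k0)%nat).
  assert (Hk : (1 <= NN s x k)%nat) by (apply Hk0; unfold k; lia).
  assert (glk : g p s A x k <= l).
  { apply (lim_ge _ _ _ k Hl). intros i Hi. apply (g_mono p s A x k0); auto. unfold k; lia. }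
  pose proof (g_ge_b p s A x k H Hx Hk). pose proof (Hm _ Hk).
  pose proof (NN_big s x k Hs Hx).
  assert (INR j <= INR k) by (apply le_INR; unfold k; lia).
  set (N1 := INR (NN s x k) + 1) in *.
  assert (HN1 : INR p * INR p / (m - l) < N1).
  { apply (Rmult_lt_compat_r x) in Hj; auto. unfold Rdiv in Hj. rewrite Rmult_assoc, Rinv_l in Hj by lra. nra. }
  assert (0 < N1) by (unfold N1; pose proof (pos_INR (NN s x k)); lra).
  assert (INR p * INR p / N1 < m - l).
  { apply (Rmult_lt_compat_r (m - l)) in HN1; [|lra]. unfold Rdiv in *.
    rewrite Rmult_assoc, Rinv_l, Rmult_1_r in HN1 by lra.
    apply (Rmult_lt_reg_r N1); auto. rewrite Rmult_assoc, Rinv_l by lra. lra. }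
  lra.
Qed.

Lemma lam_at p s A n J l : Hyp p s A -> (1 <= n)%nat ->
  Un_cv (g p s A (INR n / INR s ^ J)) l ->
  bseq p s A n <= l <= bseq p s A n + / P p s (INR n).
Proof.
  intros H Hn Hl. pose proof (Hs2 _ _ _ H) as Hs.
  assert (E : forall k, (J <= k)%nat -> g p s A (INR n / INR s ^ J) k = bseq p s A (s^(k-J) * n)).
  { intros k Hk. assert (INR s ^ k * (INR n / INR s ^ J) = INR (s^(k-J) * n)).
    { rewrite mult_INR, pow_INR. replace k with ((k - J) + J)%nat at 1 by lia.
      rewrite pow_add. pose proof (spow_pos s J Hs). field. lra. }
    unfold g, areal. rewrite H0. fold (fl (INR (s ^ (k - J) * n))). rewrite fl_INR. reflexivity. }
  split.
  - apply (lim_ge _ _ _ J Hl). intros k Hk. rewrite E; auto. apply b_sj_ge; auto.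
  - apply (lim_le _ _ _ J Hl). intros k Hk. rewrite E; auto. apply b_sj_le; auto.
Qed.


Lemma swap_div a e z : 0 <= a -> 0 < e -> 0 < z -> a / e < z -> a / z < e.
Proof.
  intros Ha He Hz H. apply (Rmult_lt_compat_r e) in H; auto. unfold Rdiv in *.
  rewrite Rmult_assoc, Rinv_l, Rmult_1_r in H by lra.
  apply (Rmult_lt_reg_r z); auto. rewrite Rmult_assoc, Rinv_l by lra. lra.
Qed.

Lemma final_step p s A lam y e n : Hyp p s A ->
  (forall x, 0 < x -> Un_cv (g p s A x) (lam x)) -> (1 <= n)%nat ->
  y - e < bseq p s A n <= y + e -> / INR n < e ->
  exists x : R, / INR s <= x < 1 /\ Rabs (lam x - y) < 3 * e.
Proof.
  intros H Hlam Hn Hb Hne. pose proof (Hs2 _ _ _ H) as Hs. pose proof (Hsp _ _ _ H) as Hsp.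
  destruct (log_exists s Hs n Hn) as [k [Hk1 Hk2]].
  set (x := INR n / INR s ^ S k).
  assert (Hsk : 0 < INR s ^ S k) by (apply spow_pos; auto).
  assert (Hs0 : 0 < INR s) by (apply INRpos; lia).
  assert (Hn0 : 0 < INR n) by (apply INRpos; auto).
  assert (Hx : 0 < x) by (unfold x; apply Rdiv_lt_0_compat; auto).
  pose proof (lam_at p s A n (S k) (lam x) H Hn (Hlam x Hx)) as [L1 L2].
  assert (/ P p s (INR n) <= / INR n).
  { apply Rinv_le_contravar; auto. apply P_ge_id; auto. apply (le_INR 1); auto. }
  exists x. split.
  - apply le_INR in Hk1. apply lt_INR in Hk2. rewrite !pow_INR in *. unfold x. split.
    + apply le_div; auto. simpl. rewrite <- Rmult_assoc, Rinv_l, Rmult_1_l; lra.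
    + apply Rmult_lt_reg_r with (INR s ^ S k); auto. unfold Rdiv.
      rewrite Rmult_assoc, Rinv_l by lra. lra.
  - apply Rabs_def1; lra.
Qed.

Lemma density p s A m M : Hyp p s A ->
  is_glb (bset p s A) m -> is_lub (bset p s A) M ->
  forall lam : R -> R, (forall x, 0 < x -> Un_cv (g p s A x) (lam x)) ->
  forall y : R, m <= y <= M -> forall eps : R, 0 < eps ->
         exists x : R, / INR s <= x < 1 /\ Rabs (lam x - y) < eps.
Proof.
  intros H [Hm1 Hm2] [HM1 HM2] lam Hlam y [Hy1 Hy2] eps Heps.
  pose proof (Hs2 _ _ _ H) as Hs. pose proof (Hp _ _ _ H) as Hp3.
  assert (Hp0 : 0 < INR p) by (apply INRpos; lia).
  set (e := eps / 3).
  assert (He : 0 < e) by (unfold e; lra).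
  replace eps with (3 * e) by (unfold e; field).
  assert (Hn0 : exists n0, (1 <= n0)%nat /\ y - e < bseq p s A n0).
  { apply NNPP. intro C. assert (M <= y - e); [|lra]. apply HM2. intros z [n [Hn ->]].
    destruct (Rle_lt_dec (bseq p s A n) (y - e)); auto. exfalso. apply C. exists n. auto. }
  destruct Hn0 as [n0 [Hn0 Hbn0]].
  assert (Hn0' : exists n0, (1 <= n0)%nat /\ bseq p s A n0 < y + e / 2).
  { apply NNPP. intro C. assert (y + e / 2 <= m); [|lra]. apply Hm2. intros z [n [Hn ->]].
    destruct (Rle_lt_dec (y + e / 2) (bseq p s A n)); auto. exfalso. apply C. exists n. auto. }
  destruct Hn0' as [n0' [Hn0'1 Hbn0']].
  destruct (nat_large (INR p * INR p / e + / e)) as [N0 HN0].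
  set (N := S N0).
  assert (HN : INR p * INR p / e + / e < INR N) by (unfold N; rewrite S_INR; lra).
  assert (HNpos : 0 < INR N) by (apply INRpos; unfold N; lia).
  assert (Hpe : 0 <= INR p * INR p / e) by (apply Rmult_le_pos; [nra| left; apply Rinv_0_lt_compat; lra]).
  assert (Hie : 0 < / e) by (apply Rinv_0_lt_compat; lra).
  assert (Hdelta : INR p * INR p / (INR N + 1) < e).
  { apply swap_div; auto. nra. lra. lra. }
  assert (HiN : / INR N < e).
  { replace (/ INR N) with (1 / INR N) by (unfold Rdiv; ring). apply swap_div; auto. lra.
    unfold Rdiv. rewrite Rmult_1_l. lra. }
  set (n1 := (s ^ N * n0)%nat).
  assert (Hn1N : (N <= n1)%nat).
  { pose proof (Nat.pow_gt_lin_r s N ltac:(lia)). unfold n1. pose proof (Nat.mul_le_mono (s^N) (s^N) 1 n0). lia. }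
  assert (Hbn1 : y - e < bseq p s A n1) by (pose proof (b_sj_ge p s A N n0 H Hn0); unfold n1; lra).
  assert (Fin : forall n, (n1 <= n)%nat -> y - e < bseq p s A n <= y + e ->
                 exists x : R, / INR s <= x < 1 /\ Rabs (lam x - y) < 3 * e).
  { intros n Hn Hb. apply (final_step p s A lam y e n H Hlam); auto. unfold N in Hn1N; lia.
    eapply Rle_lt_trans; [|exact HiN]. apply Rinv_le_contravar; auto. apply le_INR; lia. }
  destruct (Rle_lt_dec (bseq p s A n1) (y + e)) as [Hc|Hc].
  { apply (Fin n1); auto. }
  destruct (nat_large (2 * INR p + 4 * (INR p * INR p / e) + INR n1)) as [j Hj].
  set (T := INR s ^ j * (INR n0' + 1)).
  assert (HT : INR j + 1 <= T).
  { unfold T. pose proof (pow_ge_lin s j Hs). pose proof (pos_INR n0'). pose proof (pos_INR j). nra. }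
  assert (HT0 : 0 < T) by (pose proof (pos_INR j); lra).
  assert (Hd1 : INR p / T <= / 2).
  { left. apply (Rmult_lt_reg_r T); auto. unfold Rdiv. rewrite Rmult_assoc, Rinv_l by lra.
    pose proof (pos_INR n1). lra. }
  assert (Hd2 : 2 * INR p * (INR p / T) < e / 2).
  { replace (2 * INR p * (INR p / T)) with ((4 * (INR p * INR p)) / T / 2) by (field; lra).
    assert (4 * (INR p * INR p) / T < e); [|lra].
    apply swap_div; auto. nra. replace (4 * (INR p * INR p) / e) with (4 * (INR p * INR p / e)) by (field; lra).
    pose proof (pos_INR n1). lra. }
  pose proof (b_pad p s A j n0' H Hn0'1 Hd1) as Hbpad. fold T in Hbpad.
  set (n2 := pad s j n0') in *.
  assert (Hn12 : (n1 < n2)%nat).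
  { assert (INR n1 < INR j) by (pose proof (Rmult_le_pos _ _ (Rle_trans _ _ _ (Rlt_le _ _ Hp0) (Rle_refl _)) Hpe); lra).
    apply INR_lt in H0. pose proof (Nat.pow_gt_lin_r s j ltac:(lia)).
    unfold n2, pad. pose proof (Nat.mul_le_mono (s^j) (s^j) 2 (n0'+1)). lia. }
  assert (Hbn2 : bseq p s A n2 <= y + e) by lra.
  set (f := fun i => bseq p s A (n1 + i)).
  assert (Hstep : forall i, f i - e <= f (S i)).
  { intro i. unfold f. replace (n1 + S i)%nat with (S (n1 + i)) by lia.
    assert (Hi : (1 <= n1 + i)%nat) by (unfold N in Hn1N; lia).
    pose proof (b_step p s A (n1 + i) H Hi).
    assert (INR p * INR p / (INR (n1 + i) + 1) <= INR p * INR p / (INR N + 1)).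
    { unfold Rdiv. apply Rmult_le_compat_l. nra. apply Rinv_le_contravar. lra.
      apply Rplus_le_compat_r, le_INR. lia. }
    lra. }
  destruct (walk f (y + e) e Hstep) with (n2 - n1)%nat as [i [Hi1 Hi2]].
  { unfold f. rewrite Nat.add_0_r. lra. }
  { unfold f. replace (n1 + (n2 - n1))%nat with n2 by lia. auto. }
  apply (Fin (n1 + i)%nat). lia. unfold f in Hi2. lra.
Qed.


Theorem mainTheorem9 (p s : nat) (A : list nat)
  (Hp : (3 <= p)%nat) (Hs2 : (2 <= s)%nat) (Hsp : (s < p)%nat)
  (HAsort : Sorted lt A) (HAlen : length A = s)
  (HAsub : forall a, In a A -> (a < p)%nat) :
  exists lam : R -> R,
    (forall x : R, 0 < x ->
       Un_cv (fun k : nat =>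
                INR (areal p s A (INR s ^ k * x))
                / Rpower (INR s ^ k * x) (logsp p s))
             (lam x)) /\
    (forall x : R, 0 < x -> lam (INR s * x) = lam x) /\
    exists m M : R,
      is_glb (bset p s A) m /\ is_lub (bset p s A) M /\
      (forall x : R, 0 < x -> m <= lam x <= M) /\
      (forall y : R, m <= y <= M -> forall eps : R, 0 < eps ->
         exists x : R, / INR s <= x < 1 /\ Rabs (lam x - y) < eps).
Proof.
  assert (H : Hyp p s A) by (constructor; auto).
  set (lam := fun x => epsilon (inhabits 0) (fun l => Un_cv (g p s A x) l)).
  assert (Hlam : forall x, 0 < x -> Un_cv (g p s A x) (lam x)).
  { intros x Hx. unfold lam. apply (epsilon_spec (inhabits 0) (fun l => Un_cv (g p s A x) l)).
    apply g_conv; auto. }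
  exists lam. split; [exact Hlam|]. split.
  { intros x Hx. assert (Hsx : 0 < INR s * x) by (apply Rmult_lt_0_compat; auto; apply INRpos; lia).
    apply (UL_sequence (g p s A (INR s * x))). apply Hlam; auto.
    apply (cv_ext (fun j => g p s A x (S j))). apply cv_shift1. apply Hlam; auto.
    intro k. unfold g. replace (INR s ^ k * (INR s * x)) with (INR s ^ S k * x) by (simpl; ring).
    reflexivity. }
  assert (Hb1 : bset p s A (bseq p s A 1)) by (exists 1%nat; split; auto).
  assert (Hp0 : 0 < INR p) by (apply INRpos; lia).
  destruct (completeness (bset p s A)) as [M HM].
  { exists (INR p). intros z [n [Hn ->]]. apply b_le_p; auto. }
  { eexists; eauto. }
  set (E' := fun z => bset p s A (- z)).
  destruct (completeness E') as [m' Hm'].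
  { exists 0. intros z Hz. unfold E' in Hz. destruct Hz as [n [Hn Hz]].
    pose proof (b_pos p s A n H Hn). lra. }
  { exists (- bseq p s A 1). unfold E'. rewrite Ropp_involutive. auto. }
  assert (Hglb : is_glb (bset p s A) (- m')).
  { destruct Hm' as [Hm1 Hm2]. split.
    - intros z Hz. assert (- z <= m'); [|lra]. apply Hm1. unfold E'. rewrite Ropp_involutive. auto.
    - intros l Hl. assert (m' <= - l); [|lra]. apply Hm2. intros z Hz. unfold E' in Hz.
      specialize (Hl _ Hz). lra. }
  exists (- m'), M. split; auto. split; auto. split.
  - intros x Hx. split.
    + apply (lam_lower p s A x (lam x) (- m') H Hx (Hlam x Hx)). intros n Hn.
      apply (proj1 Hglb). exists n; auto.
    + apply (lam_upper p s A x (lam x) M H Hx (Hlam x Hx)). intros n Hn.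
      apply (proj1 HM). exists n; auto.
  - apply (density p s A (- m') M H Hglb HM lam Hlam).
Qed.
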